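(* Let $G=\langle A\cup B\rangle$ be a CS group and let $g\in G$. Then: (1) $\mathrm{syl}(g|_x)\le \tfrac12(\mathrm{syl}(g)+1)$ for all $x\in X$; (2) $\sum_{x\in X}\mathrm{syl}(g|_x)\le \mathrm{syl}(g)$; (3) $\mathrm{syl}(g\|_x)\le\mathrm{syl}(g)$ for all $x\in X$ with $\ell_g(x)<\infty$; (4) if the permutation $g|^\epsilon$ has finite order, then $g\|_x\in A$ for all but finitely many $x\in X$.
   Context: Let $X$ be a nonempty set (possibly infinite) with a distinguished letter $0\in X$, and $\dot X=X\setminus\{0\}$. $X^*$ is the free monoid on $X$ (concatenation $u\star v$, empty word $\epsilon$), viewed as a regular rooted tree; $X^n$ is the $n$-th layer. $\mathrm{Aut}(X^* )$ is the group of root-fixing tree automorphisms, acting on the right ($v\mapsto v.g$; $gh$ = first $g$ then $h$); conjugation is ${}^hg=hgh^{-1}$. The section $g|_u$ is defined by $(u\star v).g=u.g\star v.(g|_u)$ for all $v$; $g|^\epsilon\in\mathrm{Sym}(X)$ is the permutation induced by $g$ on $X^1=X$. Elements $\rho\in\mathrm{Sym}(X)$ are identified with rooted automorphisms $(x\star v).\rho=x.\rho\star v$. $\mathrm{St}(1)$ is the stabiliser of all vertices of $X^1$. For a vertex $v$, $\ell_g(v)$ is the length of the $\langle g\rangle$-orbit of $v$; if finite, $g\|_v:=g^{\ell_g(v)}|_v$ (stabilised section). A constant spinal (CS) group is $G=\langle A\cup B\rangle\le\mathrm{Aut}(X^* )$, where $A\le\mathrm{Sym}(X)$ is a transitive permutation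 group (the rooted group, embedded as rooted automorphisms) and $B\le\mathrm{St}(1)$ is a subgroup (the directed group) such that $b|_0=b$ for all $b\in B$ and the elements $b|_x$ ($b\in B$, $x\in\dot X$) lie in $A$ and generate $A$. Every $g\in G$ can be written $g=({}^{a_0}b_0)({}^{a_1}b_1)\cdots({}^{a_{n-1}}b_{n-1})a_n$ with $a_i\in A$, $b_i\in B$, $n\in\mathbb N$; the syllable length $\mathrm{syl}(g)$ is the least such $n$. *)

(* Defs.v *)
From mathcomp Require Import all_boot.
From mathcomp Require Import boolp.
From Stdlib Require List.
Set Implicit Arguments. Unset Strict Implicit. Unset Printing Implicit Defensive.

Section CS.
Variable X : Type.

(* Vertices of the tree X^* are words (seq X); the root is [::].
   Automorphisms act on the RIGHT: v.g is written (g v), and the product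
   g h (first g, then h) is the function (fun v => h (g v)). *)

Definition aut_mul (g h : seq X -> seq X) : seq X -> seq X := fun v => h (g v).

Definition is_tree_aut (g : seq X -> seq X) : Prop :=
  bijective g /\ (forall u, size (g u) = size u) /\
  (forall u v, g u = take (size u) (g (u ++ v))).

(* section g|_u : (u ++ v).g = u.g ++ v.(g|_u) *)
Definition section (g : seq X -> seq X) (u : seq X) : seq X -> seq X :=
  fun v => drop (size u) (g (u ++ v)).

Definition rooted (rho : X -> X) : seq X -> seq X :=
  fun v => if v is x :: w then rho x :: w else [::].

Definition top_perm (g : seq X -> seq X) (x0 : X) : X -> X :=
  fun x => head x0 (g [:: x]).

Definition is_subgroup (T : Type) (S : (T -> T) -> Prop) : Prop :=
  S id /\ (forall f g, S f -> S g -> S (fun t => g (f t))) /\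
  (forall f, S f -> exists f', S f' /\ cancel f f' /\ cancel f' f).

Inductive generated (T : Type) (Sg : (T -> T) -> Prop) : (T -> T) -> Prop :=
  | gen_base f : Sg f -> generated Sg f
  | gen_id : generated Sg id
  | gen_mul f g : generated Sg f -> generated Sg g -> generated Sg (fun t => g (f t))
  | gen_inv f f' : generated Sg f -> cancel f f' -> cancel f' f -> generated Sg f'
  | gen_ext f f' : generated Sg f -> f =1 f' -> generated Sg f'.

Definition CS_data (x0 : X) (A : (X -> X) -> Prop)
    (B : (seq X -> seq X) -> Prop) : Prop :=
  is_subgroup A /\
  (forall x y, exists a, A a /\ a x = y) /\
  (is_subgroup B /\ (forall b, B b -> is_tree_aut b)) /\
  (forall b x, B b -> b [:: x] = [:: x]) /\
  (forall b, B b -> section b [:: x0] =1 b) /\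
  (forall b x, B b -> x <> x0 ->
     exists a, A a /\ section b [:: x] =1 rooted a) /\
  (forall a, A a -> generated
     (fun s => exists b x, [/\ B b, x <> x0 & section b [:: x] =1 rooted s])
     a).

Definition CS_group (A : (X -> X) -> Prop) (B : (seq X -> seq X) -> Prop)
  : (seq X -> seq X) -> Prop :=
  generated (fun g => (exists a, A a /\ g = rooted a) \/ B g).

(* conjugate ^a b = a b a^{-1} (first a, then b, then a^{-1}) *)
Definition conj_syl (t : (X -> X) * (X -> X) * (seq X -> seq X)) :
  seq X -> seq X :=
  let: (a, ainv, b) := t in fun v => rooted ainv (b (rooted a v)).

(* ( ^{a_0} b_0 ) ... ( ^{a_{n-1}} b_{n-1} ) a_n *)
Definition syl_eval (s : seq ((X -> X) * (X -> X) * (seq X -> seq X)))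
  (an : X -> X) : seq X -> seq X :=
  foldr (fun t f => fun v => f (conj_syl t v)) (rooted an) s.

Definition syl_rep (A : (X -> X) -> Prop) (B : (seq X -> seq X) -> Prop)
  (g : seq X -> seq X) (n : nat) : Prop :=
  exists s an, [/\ size s = n, A an,
    (forall t, List.In t s ->
       let: (a, ainv, b) := t in [/\ A a, cancel a ainv, cancel ainv a & B b])
    & g =1 syl_eval s an].

(* syllable length: least n with a decomposition (0 if none exists) *)
Definition syl (A : (X -> X) -> Prop) (B : (seq X -> seq X) -> Prop)
  (g : seq X -> seq X) : nat :=
  match pselect (exists n, syl_rep A B g n) with
  | left H =>
      @ex_minn (fun n => `[< syl_rep A B g n >])
        (let: ex_intro n Hn := H in ex_intro _ n (introT (asboolP _) Hn))
  | right _ => 0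
  end.

Definition orbit_len (g : seq X -> seq X) (v : seq X) (k : nat) : Prop :=
  0 < k /\ iter k g v = v /\ (forall j, 0 < j < k -> iter j g v <> v).

(* stabilised section g||_v = g^{ell_g(v)}|_v, given ell_g(v) = k *)
Definition stab_section (g : seq X -> seq X) (k : nat) (v : seq X) :
  seq X -> seq X := section (iter k g) v.

End CS.

(* Main.v *)
Require Import Defs.
From mathcomp Require Import all_boot.
From mathcomp Require Import boolp.
From Stdlib Require List.
From mathcomp Require Import zify.
Set Implicit Arguments. Unset Strict Implicit. Unset Printing Implicit Defensive.


Lemma rooted_id (X : Type) (v : seq X) : rooted id v = v.
Proof. by case: v. Qed.

Lemma rooted_comp (X : Type) (a a' : X -> X) v :
  rooted a' (rooted a v) = rooted (fun z => a' (a z)) v.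
Proof. by case: v. Qed.

Lemma rooted_ext (X : Type) (a a' : X -> X) : a =1 a' -> rooted a =1 rooted a'.
Proof. by move=> H [|y w] //=; rewrite H. Qed.

Lemma rooted_cancel (X : Type) (a ai : X -> X) : cancel a ai -> cancel (rooted a) (rooted ai).
Proof. by move=> H [|y w] //=; rewrite H. Qed.

Lemma tree_cons (X : Type) (b : seq X -> seq X) y v :
  is_tree_aut b -> b [:: y] = [:: y] -> b (y :: v) = y :: section b [:: y] v.
Proof.
move=> [_ [_ Hp]] Hy; rewrite /section.
have := Hp [:: y] v; rewrite Hy /= => E.
by rewrite -{1}[b (y :: v)](cat_take_drop 1) -E.
Qed.

Lemma tree_nil (X : Type) (b : seq X -> seq X) : is_tree_aut b -> b [::] = [::].
Proof. by move=> [_ [Hs _]]; apply/size0nil; rewrite Hs. Qed.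

Definition ev (X : Type) (s : seq ((X -> X) * (X -> X) * (seq X -> seq X))) (h : seq X -> seq X) :=
  foldr (fun t f => fun v => f (conj_syl t v)) h s.

Lemma ev_h X s h (v : seq X) : ev s h v = h (ev s id v).
Proof. by elim: s v => [|t s IH] v //=; rewrite IH. Qed.

Lemma ev_cat X s1 s2 (v : seq X) : ev (s1 ++ s2) id v = ev s2 id (ev s1 id v).
Proof. by elim: s1 v => [|t s IH] v //=; rewrite IH. Qed.

Lemma syl_eval_ev X s an (v : seq X) : syl_eval s an v = rooted an (ev s id v).
Proof. by rewrite -ev_h. Qed.

Definition conjby X (a ai : X -> X) (t : (X -> X) * (X -> X) * (seq X -> seq X)) :=
  let: (a0, ai0, b) := t in (fun z => a0 (a z), fun z => ai (ai0 z), b).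

Lemma conjby_ok X (a ai : X -> X) s (w : seq X) : cancel ai a ->
  ev s id (rooted a w) = rooted a (ev (map (conjby a ai) s) id w).
Proof.
move=> H; elim: s w => [|[[a0 ai0] b] s IH] w //=.
rewrite -IH !rooted_comp.
have E : (fun z => a (ai (ai0 z))) =1 ai0 by move=> z; rewrite H.
by rewrite (rooted_ext E).
Qed.


Definition vts X (A : (X -> X) -> Prop) (B : (seq X -> seq X) -> Prop)
  (s : seq ((X -> X) * (X -> X) * (seq X -> seq X))) :=
  forall t, List.In t s ->
       let: (a, ainv, b) := t in [/\ A a, cancel a ainv, cancel ainv a & B b].

Lemma In_map T U (f : T -> U) (s : seq T) u :
  List.In u (map f s) -> exists t, List.In t s /\ u = f t.
Proof.
elim: s => [|t s IH] //= [<-|/IH [t0 [H1 H2]]]; first by exists t; auto.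
by exists t0; auto.
Qed.

Lemma In_map2 T U (f : T -> U) (s : seq T) t :
  List.In t s -> List.In (f t) (map f s).
Proof. by elim: s => [|t0 s IH] //= [->|/IH]; auto. Qed.

Lemma vts_cat X A B (s1 s2 : seq ((X -> X) * (X -> X) * (seq X -> seq X))) :
  vts A B s1 -> vts A B s2 -> vts A B (s1 ++ s2).
Proof. by move=> H1 H2 t /List.in_app_iff [/H1|/H2]. Qed.

Lemma vts_conj X A B (a ai : X -> X) s :
  is_subgroup A -> A a -> cancel a ai -> cancel ai a -> vts A B s ->
  vts A B (map (conjby a ai) s).
Proof.
move=> [_ [HAm _]] Ha c1 c2 Hs t Hin.
have [t0 [Ht Et]] := In_map Hin; subst t; clear Hin.
case: t0 Ht => [[a0 ai0] b] Ht /=.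
have /= [ha0 c3 c4 hb] := Hs _ Ht.
split=> //; first exact: HAm.
- by move=> z /=; rewrite c3 c1.
- by move=> z /=; rewrite c2 c4.
Qed.


Lemma vts_cons X A B (t : (X -> X) * (X -> X) * (seq X -> seq X)) s :
  vts A B (t :: s) -> vts A B s.
Proof. by move=> H u Hu; apply: H; right. Qed.

Lemma vts_head X A B (t : (X -> X) * (X -> X) * (seq X -> seq X)) s :
  vts A B (t :: s) -> let: (a, ainv, b) := t in [/\ A a, cancel a ainv, cancel ainv a & B b].
Proof. by move=> H; apply: H; left. Qed.

Lemma vts_inv X (A : (X -> X) -> Prop) B s : is_subgroup B -> vts A B s ->
  exists s', vts A B s' /\ forall u, ev s' id (ev s id u) = u.
Proof.
move=> [_ [_ HBi]]; elim: s => [|t s IH] Hs; first by exists [::]; split.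
have {IH} [s' [Hs' E]] := IH (vts_cons Hs).
case: t Hs => [[a ai] b] Hs; have /= [Ha c1 c2 Hb] := vts_head Hs.
have [b' [Hb' [d1 d2]]] := HBi _ Hb.
exists (s' ++ [:: (a, ai, b')]); split.
  apply: vts_cat => // t [<-|[]] //.
move=> u; rewrite ev_cat /= E /conj_syl.
by rewrite (rooted_cancel c2) d1 (rooted_cancel c1).
Qed.

Lemma rep_exists X x0 A B (g : seq X -> seq X) :
  CS_data x0 A B -> CS_group A B g ->
  exists s an, [/\ A an, vts A B s & g =1 syl_eval s an].
Proof.
move=> [HA [Htr [[HB HBt] [HBst [H0 [Hx Hgen]]]]]].
have [HA1 [HAm HAi]] := HA.
have [HB1 [HBm HBi]] := HB.
elim=> {g}.
- move=> f [[a [Ha ->]]|Hf].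
    by exists [::], a; split.
  exists [:: (id, id, f)], id; split=> //.
    by move=> t [<-|[]].
  by move=> v /=; rewrite /conj_syl !rooted_id.
- by exists [::], id; split=> // v; rewrite /= rooted_id.
- move=> f g _ [s1 [a1 [Ha1 Hs1 Ef]]] _ [s2 [a2 [Ha2 Hs2 Eg]]].
  have [a1i [Ha1i [c1 c2]]] := HAi _ Ha1.
  exists (s1 ++ map (conjby a1 a1i) s2), (fun z => a2 (a1 z)); split.
  + exact: HAm.
  + by apply: vts_cat => //; apply: vts_conj.
  + move=> v; rewrite Ef Eg !syl_eval_ev ev_cat (conjby_ok _ _ c2).
    by rewrite rooted_comp.
- move=> f f' _ [s [an [Han Hs Ef]]] c1 c2.
  have [s' [Hs' E]] := vts_inv HB Hs.
  have [ani [Hani [d1 d2]]] := HAi _ Han.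
  exists (map (conjby ani an) s'), ani; split=> //.
    exact: vts_conj.
  have EE : forall u, syl_eval (map (conjby ani an) s') ani (f u) = u.
    move=> u; rewrite syl_eval_ev -(conjby_ok _ _ d1) Ef syl_eval_ev.
    by rewrite (rooted_cancel d1) E.
  by move=> w; rewrite -{2}(c2 w) EE.
- move=> f f' _ [s [an [Han Hs Ef]]] E.
  by exists s, an; split=> // v; rewrite -E.
Qed.


Lemma syl_le X (A : (X -> X) -> Prop) B h n : syl_rep A B h n -> syl A B h <= n.
Proof.
move=> H; rewrite /syl; case: pselect => [H'|[]]; last by exists n.
case: ex_minnP => m _ Hm; apply: Hm; exact/asboolP.
Qed.

Lemma syl_spec X (A : (X -> X) -> Prop) B h :
  (exists n, syl_rep A B h n) -> syl_rep A B h (syl A B h).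
Proof.
move=> H; rewrite /syl; case: pselect => [H'|//].
by case: ex_minnP => m /asboolP.
Qed.

Lemma syl_rep_ext X (A : (X -> X) -> Prop) B h h' n :
  h =1 h' -> syl_rep A B h n -> syl_rep A B h' n.
Proof. by move=> E [s [an [H1 H2 H3 H4]]]; exists s, an; split=> // v; rewrite -E. Qed.

Lemma min_rep X x0 A B (g : seq X -> seq X) :
  CS_data x0 A B -> CS_group A B g ->
  exists s an, [/\ size s = syl A B g, A an, vts A B s & g =1 syl_eval s an].
Proof.
move=> HD Hg; have [s [an [H1 H2 H3]]] := rep_exists HD Hg.
have := @syl_spec _ A B g; case.
  by exists (size s), s, an.
by move=> s' [an' [? ? ? ?]]; exists s', an'.
Qed.


Definition fac X := ((X -> X) + (seq X -> seq X))%type.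

Definition fapp X (f : fac X) : seq X -> seq X :=
  match f with inl a => rooted a | inr b => b end.

Definition validf X (A : (X -> X) -> Prop) (B : (seq X -> seq X) -> Prop) (f : fac X) :=
  match f with inl a => exists a', A a' /\ a =1 a' | inr b => B b end.

Fixpoint compL X (L : seq (fac X)) : seq X -> seq X :=
  match L with [::] => id | f :: L' => fun v => compL L' (fapp f v) end.

Definition isB X (f : fac X) := if f is inr _ then true else false.
Definition headB X (L : seq (fac X)) := if L is f :: _ then isB f else false.

Fixpoint runs X (L : seq (fac X)) : nat :=
  match L with
  | [::] => 0
  | f :: L' => runs L' + (isB f && ~~ headB L')
  end.

Lemma runs_count X (L : seq (fac X)) : runs L <= count (@isB X) L.
Proof. elim: L => [|[a|b] L IH] //=; case: (headB L) => /=; lia. Qed.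

Lemma runs_countA X (L : seq (fac X)) :
  runs L <= count (predC (@isB X)) L + headB L.
Proof.
elim: L => [|[a|b] L IH] //=; case: (headB L) IH => /=; lia.
Qed.

Lemma runs_half X (L : seq (fac X)) : 2 * runs L <= size L + 1.
Proof.
have := runs_count L; have := runs_countA L; have := count_predC (@isB X) L.
case: (headB L) => /=; lia.
Qed.

Lemma comp_cat X (L1 L2 : seq (fac X)) v : compL (L1 ++ L2) v = compL L2 (compL L1 v).
Proof. by elim: L1 v => //= f L1 IH v; rewrite IH. Qed.

Definition allv X A B (L : seq (fac X)) := forall f, List.In f L -> validf A B f.

Lemma K X (A : (X -> X) -> Prop) B (L : seq (fac X)) :
  is_subgroup A -> is_subgroup B -> allv A B L ->
  exists s an, [/\ size s = runs L, A an, vts A B s, compL L =1 syl_eval s an &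
    (headB L -> exists b s', B b /\ s = (id, id, b) :: s')].
Proof.
move=> HA HB; have [HA1 [HAm HAi]] := HA; have [HB1 [HBm HBi]] := HB.
elim: L => [|f L IH] HL.
  by exists [::], id; split=> // v; rewrite /= rooted_id.
have HL' : allv A B L by move=> h Hh; apply: HL; right.
have Hf : validf A B f by apply: HL; left.
have [s [an [Hsz Han Hs Ec Hh]]] := IH HL'.
clear IH HL; case: f Hf => [a [a' [Ha' Ea]]|b Hb] /=.
- have [ai [Hai [c1 c2]]] := HAi _ Ha'.
  exists (map (conjby a' ai) s), (fun z => an (a' z)); split.
  + by rewrite size_map Hsz addn0.
  + exact: HAm.
  + exact: vts_conj.
  + move=> v; rewrite (rooted_ext Ea) Ec !syl_eval_ev (conjby_ok _ _ c2).
    by rewrite rooted_comp.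
  + by [].
- case E: (headB L).
  + have [b2 [s' [Hb2 Es]]] := Hh E; subst s.
    exists ((id, id, fun v => b2 (b v)) :: s'), an; split=> //.
    * by rewrite addn0.
    * move=> t [<-|Ht]; first by split=> //; apply: HBm.
      by apply: Hs; right.
    * by move=> v /=; rewrite Ec /= /conj_syl !rooted_id.
    * by move=> _; exists (fun v => b2 (b v)), s'; split=> //; apply: HBm.
  + exists ((id, id, b) :: s), an; split=> //.
    * by rewrite /= Hsz addn1.
    * by move=> t [<-|Ht]; [ | apply: Hs].
    * by move=> v /=; rewrite Ec /= /conj_syl !rooted_id.
    * by move=> _; exists b, s.
Qed.

Lemma syl_comp X (A : (X -> X) -> Prop) B (L : seq (fac X)) :
  is_subgroup A -> is_subgroup B -> allv A B L -> syl A B (compL L) <= runs L.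
Proof.
move=> HA HB HL; have [s [an [H1 H2 H3 H4 _]]] := K HA HB HL.
by apply: syl_le; exists s, an; split.
Qed.


Definition facx X (x0 x : X) (t : (X -> X) * (X -> X) * (seq X -> seq X)) : fac X :=
  let: (a, ai, b) := t in
  if pselect (a x = x0) then inr b else inl (fun z => head x0 (section b [:: a x] [:: z])).

Lemma isB_facx X (x0 x : X) a ai b : isB (facx x0 x (a, ai, b)) -> a x = x0.
Proof. by rewrite /facx; case: pselect. Qed.

Lemma facx_ok X x0 A B (x : X) a ai b : CS_data x0 A B -> B b ->
  validf A B (facx x0 x (a, ai, b)) /\ fapp (facx x0 x (a, ai, b)) =1 section b [:: a x].
Proof.
move=> [HA [Htr [[HB HBt] [HBst [H0 [Hx Hgen]]]]]] Hb.
rewrite /facx; case: pselect => [E|NE] /=.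
  by split=> // v; rewrite E H0.
have [a' [Ha' E]] := Hx _ _ Hb NE.
have E' : (fun z => head x0 (section b [:: a x] [:: z])) =1 a' by move=> z; rewrite E.
split; first by exists a'.
by move=> v; rewrite (rooted_ext E') E.
Qed.

Lemma facx_valid X x0 A B (x : X) s : CS_data x0 A B -> vts A B s ->
  allv A B (map (facx x0 x) s).
Proof.
move=> HD Hs f Hin; have [t [Ht Et]] := In_map Hin; subst f; clear Hin.
case: t Ht => [[a ai] b] Ht.
have /= [_ _ _ Hb] := Hs _ Ht.
by have [] := facx_ok x a ai HD Hb.
Qed.

Lemma eval_cons X x0 A B (x : X) s an v : CS_data x0 A B -> vts A B s ->
  syl_eval s an (x :: v) = an x :: compL (map (facx x0 x) s) v.
Proof.
move=> HD; have HD' := HD.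
move: HD' => [HA [Htr [[HB HBt] [HBst [H0 [Hx Hgen]]]]]].
elim: s v => [|[[a ai] b] s IH] v Hs //=.
have /= [Ha c1 c2 Hb] := vts_head Hs.
rewrite -IH; last exact: vts_cons Hs.
have [_ ->] := facx_ok x a ai HD Hb.
rewrite /conj_syl /= (tree_cons _ (HBt _ Hb)) //=; last exact: HBst.
by rewrite c1.
Qed.

Lemma comp_nil X x0 A B (L : seq (fac X)) : CS_data x0 A B -> allv A B L ->
  compL L [::] = [::].
Proof.
move=> [HA [Htr [[HB HBt] [HBst [H0 [Hx Hgen]]]]]].
elim: L => [|f L IH] HL //=.
have HL' : allv A B L by move=> h Hh; apply: HL; right.
have Hf : validf A B f by apply: HL; left.
clear HL; case: f Hf => [a _|b Hb] /=; first exact: IH.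
by rewrite tree_nil; [exact: IH | exact: HBt].
Qed.


Arguments facx : simpl never.

Lemma sumn_mapD T (f g : T -> nat) xs :
  sumn (map (fun x => f x + g x) xs) = sumn (map f xs) + sumn (map g xs).
Proof. elim: xs => //= x xs ->; lia. Qed.

Lemma sumn_map_le T (f g : T -> nat) xs : (forall x, f x <= g x) ->
  sumn (map f xs) <= sumn (map g xs).
Proof. move=> H; elim: xs => //= x xs IH; have := H x; lia. Qed.

Lemma sum_one X (x0 : X) a ai b xs : cancel a ai -> List.NoDup xs ->
  sumn (map (fun x => nat_of_bool (isB (facx x0 x (a, ai, b)))) xs) <= 1.
Proof.
move=> c; elim: xs => //= x xs IH /List.NoDup_cons_iff [Hn Hd].
case E: (isB (facx x0 x (a, ai, b))) => /=; last exact: IH.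
have Ex := isB_facx E.
suff -> : sumn (map (fun x => nat_of_bool (isB (facx x0 x (a, ai, b)))) xs) = 0 by [].
elim: xs Hn {IH Hd} => //= y xs IH Hn.
case Ey: (isB (facx x0 y (a, ai, b))).
  have Ey' := isB_facx Ey; case: Hn; left.
  by rewrite -(c y) -(c x) Ey' Ex.
by rewrite IH // => H; apply: Hn; right.
Qed.

Lemma sum_count X x0 A B (s : seq ((X -> X) * (X -> X) * (seq X -> seq X))) xs :
  vts A B s -> List.NoDup xs ->
  sumn (map (fun x => count (@isB X) (map (facx x0 x) s)) xs) <= size s.
Proof.
move=> Hs Hd; elim: s Hs => [|[[a ai] b] s IH] Hs.
  by elim: xs {Hd} => //.
rewrite [size _]/=.
under eq_map do rewrite map_cons [count _ _]/=.
have /= [_ c1 _ _] := vts_head Hs.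
rewrite sumn_mapD; have := sum_one x0 b c1 Hd; have := IH (vts_cons Hs); lia.
Qed.

Lemma section_eq X x0 A B (g : seq X -> seq X) s an x : CS_data x0 A B -> vts A B s ->
  g =1 syl_eval s an -> section g [:: x] =1 compL (map (facx x0 x) s).
Proof. move=> HD Hs E v; rewrite /section /= E (eval_cons x an v HD Hs) /=. by rewrite drop0. Qed.

Lemma allv_cat X A B (L1 L2 : seq (fac X)) : allv A B L1 -> allv A B L2 -> allv A B (L1 ++ L2).
Proof. by move=> H1 H2 f /List.in_app_iff [/H1|/H2]. Qed.

Arguments facx : simpl never.

Definition Lj X (x0 : X) (s : seq ((X -> X) * (X -> X) * (seq X -> seq X))) an x j :=
  flatten (map (fun i => map (facx x0 (iter i an x)) s) (iota 0 j)).

Lemma Lj_S X (x0 : X) s an x j :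
  Lj x0 s an x j.+1 = Lj x0 s an x j ++ map (facx x0 (iter j an x)) s.
Proof. by rewrite /Lj -addn1 iotaD map_cat flatten_cat /= cats0. Qed.

Lemma Lj_valid X x0 A B s an (x : X) j : CS_data x0 A B -> vts A B s ->
  allv A B (Lj x0 s an x j).
Proof.
move=> HD Hs; elim: j => [|j IH]; first by [].
by rewrite Lj_S; apply: allv_cat => //; apply: facx_valid.
Qed.

Lemma iter_cons X x0 A B (g : seq X -> seq X) s an x v j :
  CS_data x0 A B -> vts A B s -> g =1 syl_eval s an ->
  iter j g (x :: v) = iter j an x :: compL (Lj x0 s an x j) v.
Proof.
move=> HD Hs E; elim: j => [|j IH]; first by [].
by rewrite iterS IH E (eval_cons _ _ _ HD Hs) Lj_S comp_cat iterS.
Qed.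

Lemma In_iota i m n : List.In i (iota m n) -> m <= i < m + n.
Proof.
elim: n m => [|n IH] m //= [->|/IH]; first lia.
lia.
Qed.

Lemma In_iota2 i m n : m <= i < m + n -> List.In i (iota m n).
Proof.
elim: n m => [|n IH] m /=; first lia.
case: (eqVneq i m) => [->|ne] H; first by left.
right; apply: IH; lia.
Qed.

Lemma NoDup_iota T (f : nat -> T) m n :
  (forall i j, m <= i -> i < j -> j < m + n -> f i <> f j) ->
  List.NoDup (map f (iota m n)).
Proof.
elim: n m => [|n IH] m H /=; first by constructor.
constructor.
  move=> Hin; have [i [Hi E]] := In_map Hin; have := In_iota Hi.
  by move=> Hi'; apply: (H m i) => //; lia.
apply: IH => i j Hi Hij Hj; apply: H; lia.
Qed.

Lemma iter_cancel T (f f' : T -> T) n : cancel f f' -> cancel (iter n f) (iter n f').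
Proof.
move=> c; elim: n => [|n IH] x //.
by rewrite [iter n.+1 f' _]iterSr [iter n.+1 f _]iterS c IH.
Qed.

Arguments facx : simpl never.

Lemma syl_sec X x0 A B (h : seq X -> seq X) L : CS_data x0 A B ->
  h =1 compL L -> allv A B L -> syl A B h <= runs L.
Proof.
move=> [HA [Htr [[HB HBt] [HBst [H0 [Hx Hgen]]]]]] E HL.
have [s' [an' [H1 H2 H3 H4 _]]] := K HA HB HL.
by apply: syl_le; exists s', an'; split=> // v; rewrite E H4.
Qed.

Lemma count_Lj X (x0 : X) s an x k :
  count (@isB X) (Lj x0 s an x k) =
  sumn (map (fun y => count (@isB X) (map (facx x0 y) s)) (map (fun i => iter i an x) (iota 0 k))).
Proof. by rewrite /Lj count_flatten -!map_comp. Qed.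

Lemma count0 X (x0 z : X) (s : seq ((X -> X) * (X -> X) * (seq X -> seq X))) :
  (forall t, List.In t s -> isB (facx x0 z t) = false) -> count (@isB X) (map (facx x0 z) s) = 0.
Proof.
elim: s => [|t s IH] H //=.
by rewrite H ?IH //; [move=> u Hu; apply: H; right | left].
Qed.

Lemma iter_mul T (f : T -> T) m x : iter m f x = x -> forall q, iter (q * m) f x = x.
Proof. by move=> H; elim=> [|q IH] //; rewrite mulSn iterD IH H. Qed.

Arguments facx : simpl never.

Theorem mainTheorem2 (X : Type) (x0 : X) (A : (X -> X) -> Prop)
  (B : (seq X -> seq X) -> Prop) (g : seq X -> seq X) :
  CS_data x0 A B -> CS_group A B g ->
  [/\ (* (1) *)
      (forall x : X, 2 * syl A B (section g [:: x]) <= syl A B g + 1),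
      (* (2) : the (possibly infinite) sum is bounded, i.e. every finite
         partial sum over distinct letters is bounded *)
      (forall xs : seq X, List.NoDup xs ->
         sumn (map (fun x => syl A B (section g [:: x])) xs) <= syl A B g),
      (* (3) *)
      (forall (x : X) (k : nat), orbit_len g [:: x] k ->
         syl A B (stab_section g k [:: x]) <= syl A B g)
    & (* (4) *)
      ((exists m, 0 < m /\ forall x, iter m (top_perm g x0) x = x) ->
       exists xs : seq X, forall x : X, ~ List.In x xs ->
         forall k, orbit_len g [:: x] k ->
           exists a, A a /\ stab_section g k [:: x] =1 rooted a)].
Proof.
move=> HD Hg; have HD' := HD.
move: HD' => [HA [Htr [[HB HBt] [HBst [H0 [Hx Hgen]]]]]].
have [HA1 [HAm HAi]] := HA.
have [s [an [Hsz Han Hs E]]] := min_rep HD Hg.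
have Hsyl x : syl A B (section g [:: x]) <= runs (map (facx x0 x) s).
  exact: (syl_sec HD (section_eq x HD Hs E) (@facx_valid _ _ _ _ x _ HD Hs)).
have Hstab x k : stab_section g k [:: x] =1 compL (Lj x0 s an x k).
  by move=> v; rewrite /stab_section /section /= (iter_cons x v k HD Hs E) /= drop0.
have Horb x j : iter j g [:: x] = [:: iter j an x].
  by rewrite (iter_cons x [::] j HD Hs E) (comp_nil HD (@Lj_valid _ _ _ _ _ an x j HD Hs)).
split.
- move=> x; have := Hsyl x; have := runs_half (map (facx x0 x) s).
  rewrite size_map Hsz; lia.
- move=> xs Hd; rewrite -Hsz; apply: leq_trans (sum_count x0 Hs Hd).
  apply: sumn_map_le => x; apply: leq_trans (Hsyl x) _; exact: runs_count.
- move=> x k [Hk [Hit Hne]].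
  apply: leq_trans (syl_sec HD (Hstab x k) (@Lj_valid _ _ _ _ _ an x k HD Hs)) _.
  apply: leq_trans (runs_count _) _; rewrite count_Lj -Hsz.
  apply: (@sum_count _ _ A B) => //; apply: NoDup_iota => i j _ Hij Hj Eij.
  have [ani [_ [c1 _]]] := HAi _ Han.
  have Ej : iter j an x = iter i an (iter (j - i) an x) by rewrite -iterD subnKC // ltnW.
  rewrite Ej in Eij.
  have Eq : iter (j - i) an x = x by apply: (can_inj (iter_cancel i c1)); rewrite -Eij.
  apply: (Hne (j - i)); first lia.
  by rewrite Horb Eq.
move=> [m [Hm Hper]].
have Htop : top_perm g x0 =1 an.
  by move=> z; rewrite /top_perm E (eval_cons z an [::] HD Hs).
have Hper' z : iter m an z = z by rewrite -(eq_iter Htop) Hper.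
pose Y := map (fun t : (X -> X) * (X -> X) * (seq X -> seq X) => t.1.2 x0) s.
exists (List.flat_map (fun y => map (fun j => iter j an y) (iota 0 m.+1)) Y).
move=> x Hnx k Horbk.
have HL := @Lj_valid _ _ _ _ _ an x k HD Hs.
have [s' [an' [Hs'z Han' _ Ec _]]] := K HA HB HL.
suff R0 : runs (Lj x0 s an x k) = 0.
  move: Hs'z; rewrite R0; case: s' Ec => // Ec _.
  by exists an'; split=> // v; rewrite Hstab Ec.
apply/eqP; rewrite -leqn0; apply: leq_trans (runs_count _) _.
rewrite /Lj count_flatten leqn0; apply/eqP.
elim: (iota 0 k) => //= i l ->; rewrite addn0.
apply: count0 => -[[a ai] b] Ht.
case Eb: (isB _) => //; have Ea := isB_facx Eb.
have /= [_ c1 _ _] := Hs _ Ht.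
have Ez : iter i an x = ai x0 by rewrite -Ea c1.
have HY : List.In (ai x0) Y.
  exact: (In_map2 (fun t : (X -> X) * (X -> X) * (seq X -> seq X) => t.1.2 x0) Ht).
case: Hnx; apply/List.in_flat_map; exists (ai x0); split=> //.
have Hmod := ltn_pmod i Hm; have Hdiv := divn_eq i m.
have -> : x = iter (m - i %% m) an (ai x0).
  rewrite -Ez -iterD.
  have -> : m - i %% m + i = (i %/ m).+1 * m by rewrite mulSn; lia.
  by rewrite iter_mul.
apply: (In_map2 (fun j => iter j an (ai x0))); apply: In_iota2; lia.
Qed.
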